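(* Let $R=\bigoplus_{n\ge 0} R_n$ be a graded (commutative Noetherian) ring, let $M$ be a finitely generated graded $R$-module, let $x\in R_1$ be a non-nilpotent element, and let $A=R/(1-x)R$. Then $\operatorname{tr}_R(M)A=\operatorname{tr}_A(M\otimes_R A)$. In particular, if $x$ is a non-zerodivisor on $R/\operatorname{tr}_R(M)$, then $\operatorname{tr}_R(M)$ is a prime (resp. primary, resp. radical) ideal of $R$ if and only if $\operatorname{tr}_A(M\otimes_R A)$ is a prime (resp. primary, resp. radical) ideal of $A$.
   Context: All rings are commutative and Noetherian. For a ring $S$ and an $S$-module $N$, the trace ideal of $N$ is $\operatorname{tr}_S(N)=\sum_{f\in\operatorname{Hom}_S(N,S)}\operatorname{Im} f$. *)

(* Defs.v *)
From mathcomp Require Import all_boot all_order all_algebra.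
Set Implicit Arguments. Unset Strict Implicit. Unset Printing Implicit Defensive.
Import GRing.Theory.
Local Open Scope ring_scope.

Definition is_ideal (S : comPzRingType) (I : S -> Prop) : Prop :=
  [/\ I 0, (forall a b, I a -> I b -> I (a + b)) & (forall r a, I a -> I (r * a))].

Definition noetherian (S : comPzRingType) : Prop :=
  forall I : S -> Prop, is_ideal I ->
    exists (n : nat) (g : 'I_n -> S), (forall i, I (g i)) /\
      (forall a, I a <-> exists c : 'I_n -> S, a = \sum_(i < n) c i * g i).

Definition fin_gen (S : comPzRingType) (V : lmodType S) : Prop :=
  exists (n : nat) (g : 'I_n -> V),
    forall v, exists c : 'I_n -> S, v = \sum_(i < n) c i *: g i.

Definition graded_ring (S : comPzRingType) (Rn : nat -> S -> Prop) : Prop :=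
  [/\ (forall n, Rn n 0) /\
      (forall n a b, Rn n a -> Rn n b -> Rn n (a - b)),
      Rn 0%N 1,
      (forall i j a b, Rn i a -> Rn j b -> Rn (i + j)%N (a * b)),
      (forall r, exists (s : seq nat) (c : nat -> S),
          uniq s /\ (forall i, Rn i (c i)) /\ r = \sum_(i <- s) c i) &
      (forall (s : seq nat) (c : nat -> S), uniq s -> (forall i, Rn i (c i)) ->
          \sum_(i <- s) c i = 0 -> forall i, i \in s -> c i = 0)].

Definition graded_module (S : comPzRingType) (Rn : nat -> S -> Prop)
    (V : lmodType S) (Mn : int -> V -> Prop) : Prop :=
  [/\ (forall n, Mn n 0),
      (forall n u v, Mn n u -> Mn n v -> Mn n (u - v)),
      (forall (i : nat) (j : int) a u, Rn i a -> Mn j u -> Mn (i%:Z + j) (a *: u)),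
      (forall v, exists (s : seq int) (c : int -> V),
          uniq s /\ (forall i, Mn i (c i)) /\ v = \sum_(i <- s) c i) &
      (forall (s : seq int) (c : int -> V), uniq s -> (forall i, Mn i (c i)) ->
          \sum_(i <- s) c i = 0 -> forall i, i \in s -> c i = 0)].

Definition is_hom (S : comPzRingType) (V : lmodType S) (f : V -> S) : Prop :=
  forall a u v, f (a *: u + v) = a * f u + f v.

Definition trace_ideal (S : comPzRingType) (V : lmodType S) (s : S) : Prop :=
  exists (n : nat) (f : 'I_n -> V -> S) (v : 'I_n -> V),
    (forall i, is_hom (f i)) /\ s = \sum_(i < n) f i (v i).

(* Extension I A of an ideal I of S along phi : S -> T:
   the ideal of T generated by phi(I). *)
Definition ext_ideal (S T : comPzRingType) (phi : S -> T) (I : S -> Prop) (t : T) : Prop :=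
  exists (n : nat) (b : 'I_n -> T) (r : 'I_n -> S),
    (forall i, I (r i)) /\ t = \sum_(i < n) b i * phi (r i).

Definition prime_ideal (S : comPzRingType) (I : S -> Prop) : Prop :=
  ~ I 1 /\ forall a b, I (a * b) -> I a \/ I b.

Definition primary_ideal (S : comPzRingType) (I : S -> Prop) : Prop :=
  ~ I 1 /\ forall a b, I (a * b) -> ~ I a -> exists n : nat, I (b ^+ n).

Definition radical_ideal (S : comPzRingType) (I : S -> Prop) : Prop :=
  forall (a : S) (n : nat), I (a ^+ n) -> I a.

(* Main.v *)
Require Import Defs.
From mathcomp Require Import all_boot all_order all_algebra.
From mathcomp Require Import ring zify.
From Stdlib Require Import IndefiniteDescription Classical.
Import GRing.Theory.
Local Open Scope ring_scope.

Set Implicit Arguments. Unset Strict Implicit. Unset Printing Implicit Defensive.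

Section Comp.
Variables (R : comPzRingType) (Rn : nat -> R -> Prop).
Hypothesis HR : graded_ring Rn.

Lemma Rn0 n : Rn n 0. Proof. by case: HR => [[]]. Qed.
Lemma RnB n a b : Rn n a -> Rn n b -> Rn n (a - b).
Proof. by case: HR => [[_ H]] *; apply: H. Qed.
Lemma RnN n a : Rn n a -> Rn n (- a).
Proof. move=> Ha; rewrite -sub0r; apply: RnB => //; exact: Rn0. Qed.
Lemma RnD n a b : Rn n a -> Rn n b -> Rn n (a + b).
Proof. move=> Ha Hb; rewrite -(opprK b); apply: RnB => //; exact: RnN. Qed.
Lemma Rn1 : Rn 0 1. Proof. by case: HR. Qed.
Lemma RnM i j a b : Rn i a -> Rn j b -> Rn (i + j)%N (a * b).
Proof. by case: HR => _ _ H _ _; apply: H. Qed.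
Lemma Rnsum n (I : Type) (s : seq I) (P : pred I) (F : I -> R) :
  (forall i, P i -> Rn n (F i)) -> Rn n (\sum_(i <- s | P i) F i).
Proof.
move=> H; elim/big_rec: _ => [|i y Pi Hy]; [exact: Rn0 | exact: RnD (H _ Pi) Hy].
Qed.
Lemma RnX N n a : Rn N a -> Rn (n * N)%N (a ^+ n).
Proof.
move=> Ha; elim: n => [|n IH]; first by rewrite expr0 mul0n; exact: Rn1.
by rewrite exprS mulSn; exact: RnM.
Qed.

Lemma sum_seq_iota (s : seq nat) (c : nat -> R) B : uniq s ->
  (forall i, i \in s -> i < B)%N ->
  \sum_(i <- s) c i = \sum_(0 <= i < B | i \in s) c i.
Proof.
move=> us sB; rewrite -[RHS]big_filter; apply: perm_big; apply: uniq_perm => //.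
  exact: filter_uniq (iota_uniq _ _).
move=> i; rewrite mem_filter mem_index_iota /=.
by case: (boolP (i \in s)) => // /sB ->.
Qed.

Definition bdec (r : R) (B : nat) (c : nat -> R) :=
  [/\ forall i, Rn i (c i), forall i, (B <= i)%N -> c i = 0
    & r = \sum_(0 <= i < B) c i].

Lemma bdec_ex r : exists p : nat * (nat -> R), bdec r p.1 p.2.
Proof.
case: HR => _ _ _ H _; case: (H r) => s [c [us [Hc ->]]].
exists ((\max_(i <- s) i).+1, fun i => if i \in s then c i else 0) => /=; split.
- move=> i; case: ifP => _; [exact: Hc | exact: Rn0].
- move=> i Hi; case: ifP => // si; exfalso.
  have := @leq_bigmax_seq _ s predT (fun i => i) i si isT.
  by rewrite leqNgt Hi.
- rewrite (@sum_seq_iota _ _ (\max_(i <- s) i).+1 us); last first.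
    by move=> i si; rewrite ltnS (@leq_bigmax_seq _ s predT (fun i => i) i si isT).
  by rewrite big_mkcond.
Qed.

Definition dec r := proj1_sig (constructive_indefinite_description _ (bdec_ex r)).
Definition gbnd r := (dec r).1.
Definition gcomp r := (dec r).2.
Lemma decP r : bdec r (gbnd r) (gcomp r).
Proof. exact: proj2_sig (constructive_indefinite_description _ (bdec_ex r)). Qed.

Lemma compR r j : Rn j (gcomp r j). Proof. by case: (decP r). Qed.
Lemma comp_bnd r j : (gbnd r <= j)%N -> gcomp r j = 0. Proof. by case: (decP r) => _ H _; apply: H. Qed.

Lemma sum_ext B L (c : nat -> R) : (forall i, (B <= i)%N -> c i = 0) -> (B <= L)%N ->
  \sum_(0 <= i < L) c i = \sum_(0 <= i < B) c i.
Proof.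
move=> H BL; rewrite (big_cat_nat (leq0n B) BL) /= [X in _ + X]big1_seq ?addr0 //.
by move=> i /andP [_]; rewrite mem_index_iota => /andP [Hi _]; exact: H.
Qed.

Lemma comp_sum_eq r L : (gbnd r <= L)%N -> r = \sum_(0 <= i < L) gcomp r i.
Proof.
move=> H; rewrite (sum_ext (@comp_bnd r) H); by case: (decP r).
Qed.

Lemma comp_uniq r B c : bdec r B c -> forall j, gcomp r j = c j.
Proof.
case=> Hc Hz Hr; case: (decP r) => Hc' Hz' Hr'.
set L := maxn B (gbnd r).
have E : \sum_(i <- index_iota 0 L) (gcomp r i - c i) = 0.
  rewrite sumrB (sum_ext Hz' (leq_maxr _ _)) (sum_ext Hz (leq_maxl _ _)).
  by rewrite -Hr -Hr' subrr.
case: HR => _ _ _ _ Hd.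
move=> j; case: (ltnP j L) => jL.
  apply/eqP; rewrite -subr_eq0; apply/eqP.
  apply: (Hd (index_iota 0 L) (fun i => gcomp r i - c i) (iota_uniq _ _)) => //.
    move=> i; exact: RnB.
  by rewrite mem_index_iota.
rewrite Hz ?Hz' //; apply: leq_trans jL; [exact: leq_maxr | exact: leq_maxl].
Qed.

Lemma comp_hom N y j : Rn N y -> gcomp y j = if j == N then y else 0.
Proof.
move=> Hy; apply: (@comp_uniq _ N.+1 (fun i => if i == N then y else 0)); split.
- move=> i; case: eqP => [->|_]; [done | exact: Rn0].
- move=> i Hi; case: eqP => // E; by rewrite E ltnn in Hi.
- rewrite big_nat_recr //= eqxx big1_seq ?add0r // => i /andP[_].
  by rewrite mem_index_iota => /andP[_ Hi]; rewrite ifN // neq_ltn Hi.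
Qed.

Lemma comp0 j : gcomp 0 j = 0.
Proof. by rewrite (comp_hom _ (Rn0 0)); case: eqP. Qed.

Lemma comp_add a b j : gcomp (a + b) j = gcomp a j + gcomp b j.
Proof.
case: (decP a) => Ha Hza Ea; case: (decP b) => Hb Hzb Eb.
apply: (@comp_uniq _ (maxn (gbnd a) (gbnd b)) (fun i => gcomp a i + gcomp b i)); split.
- move=> i; exact: RnD.
- move=> i Hi; rewrite Hza ?Hzb ?addr0 //; apply: leq_trans Hi;
    [exact: leq_maxr | exact: leq_maxl].
- by rewrite big_split /= (sum_ext Hza (leq_maxl _ _)) (sum_ext Hzb (leq_maxr _ _)) -Ea -Eb.
Qed.

Lemma comp_opp a j : gcomp (- a) j = - gcomp a j.
Proof.
case: (decP a) => Ha Hza Ea.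
apply: (@comp_uniq _ (gbnd a) (fun i => - gcomp a i)); split.
- move=> i; exact: RnN.
- by move=> i Hi; rewrite Hza ?oppr0.
- by rewrite sumrN -Ea.
Qed.

Lemma comp_sub a b j : gcomp (a - b) j = gcomp a j - gcomp b j.
Proof. by rewrite comp_add comp_opp. Qed.

Lemma comp_sum (I : Type) (s : seq I) (P : pred I) (F : I -> R) j :
  gcomp (\sum_(i <- s | P i) F i) j = \sum_(i <- s | P i) gcomp (F i) j.
Proof.
apply: (big_ind2 (fun u v => gcomp u j = v)) => //; first exact: comp0.
by move=> x1 x2 y1 y2 <- <-; rewrite comp_add.
Qed.

Lemma comp_mulr a b q k : Rn q b ->
  gcomp (a * b) k = if (q <= k)%N then gcomp a (k - q) * b else 0.
Proof.
move=> Hb; case: (decP a) => Ha Hza Ea.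
apply: (@comp_uniq _ (gbnd a + q) (fun k => if (q <= k)%N then gcomp a (k - q) * b else 0)); split.
- move=> i; case: ifP => H; last exact: Rn0.
  by rewrite -{1}(subnK H); apply: RnM => //; exact: compR.
- move=> i Hi; have qi : (q <= i)%N by apply: leq_trans Hi; exact: leq_addl.
  rewrite qi Hza ?mul0r // leq_subRL //; by rewrite addnC.
- rewrite {1}Ea mulr_suml (big_cat_nat (leq0n q) (leq_addl _ _)) /=.
  rewrite [X in _ = X + _]big1_seq ?add0r; last first.
    by move=> i /andP[_]; rewrite mem_index_iota => /andP[_ Hi]; rewrite leqNgt Hi.
  rewrite -{1}(add0n q) big_addn addnK.
  by apply: eq_bigr => i _; rewrite leq_addl addnK.
Qed.

Lemma comp_mull a b q k : Rn q b ->
  gcomp (b * a) k = if (q <= k)%N then b * gcomp a (k - q) else 0.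
Proof. by move=> Hb; rewrite mulrC (comp_mulr _ _ Hb) mulrC. Qed.

End Comp.

Section Tors.
Variables (R : comPzRingType) (Rn : nat -> R -> Prop).
Hypothesis HR : graded_ring Rn.
Local Notation cp := (gcomp HR).

Lemma Rnsum_seq n (I : eqType) (s : seq I) (F : I -> R) :
  (forall i, i \in s -> Rn n (F i)) -> Rn n (\sum_(i <- s) F i).
Proof. by move=> H; rewrite big_seq; apply: (Rnsum HR). Qed.

Lemma sum_delta L q (X : R) : (q < L)%N ->
  \sum_(0 <= j < L) (if j == q then X else 0) = X.
Proof.
elim: L => [//|L IH] qL; rewrite big_nat_recr //=.
case: (ltnP q L) => H.
  by rewrite IH // (gtn_eqF H) addr0.
have -> : q = L by lia.
rewrite eqxx big1_seq ?add0r // => j /andP[_]; rewrite mem_index_iota => /andP[_ jL].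
by rewrite (ltn_eqF jL).
Qed.

Lemma comp_mul_gen a b k L : (gbnd HR b <= L)%N ->
  cp (a * b) k = \sum_(0 <= j < L) (if (j <= k)%N then cp a (k - j) * cp b j else 0).
Proof.
move=> HL; rewrite {1}(comp_sum_eq HL) mulr_sumr comp_sum.
by apply: eq_bigr => j _; rewrite (comp_mulr HR _ _ (compR HR b j)).
Qed.

Lemma comp_mul_top a b p q : (forall i, (p < i)%N -> cp a i = 0) ->
  (forall j, (q < j)%N -> cp b j = 0) ->
  cp (a * b) (p + q) = cp a p * cp b q /\
  forall k, (p + q < k)%N -> cp (a * b) k = 0.
Proof.
move=> Ha Hb; set L := maxn (gbnd HR b) q.+1.
have HL : (gbnd HR b <= L)%N by exact: leq_maxl.
split.
  rewrite (comp_mul_gen _ _ HL) -(@sum_delta L q (cp a p * cp b q)); last exact: leq_maxr.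
  apply: eq_bigr => j _; case: (ltngtP j q) => H.
  - rewrite ifT; last by lia.
    by rewrite Ha ?mul0r //; lia.
  - by rewrite (Hb j H) mulr0; case: ifP.
  - by rewrite H leq_addl addnK.
move=> k Hk; rewrite (comp_mul_gen _ _ HL) big1_seq // => j _.
case: ifP => // jk; case: (leqP j q) => H.
  by rewrite Ha ?mul0r //; lia.
by rewrite Hb ?mulr0.
Qed.

Lemma comp_pow_top a p : (forall i, (p < i)%N -> cp a i = 0) -> forall n,
  cp (a ^+ n) (n * p) = cp a p ^+ n /\
  forall k, (n * p < k)%N -> cp (a ^+ n) k = 0.
Proof.
move=> Ha; elim=> [|n [IH1 IH2]].
  rewrite !expr0 mul0n; split; first by rewrite (comp_hom HR _ (Rn1 HR)).
  by move=> k Hk; rewrite (comp_hom HR _ (Rn1 HR)) (gtn_eqF Hk).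
have := comp_mul_top Ha IH2; rewrite -mulSn IH1 -exprS => [[-> H2]]; split => //.
by rewrite exprS.
Qed.

Lemma homog_Rn (x : R) (Hx : Rn 1 x) r N : (gbnd HR r <= N.+1)%N ->
  Rn N (\sum_(0 <= j < gbnd HR r) x ^+ (N - j) * cp r j).
Proof.
move=> HN; apply: Rnsum_seq => j; rewrite mem_index_iota => /andP[_ jb].
have E : N = ((N - j) * 1 + j)%N by lia.
rewrite {1}E.
apply: (RnM HR); [exact: (RnX HR) | exact: compR].
Qed.

Variable x : R.
Hypothesis Hx : Rn 1 x.

Lemma key_tors (P : R -> Prop) N y s :
  P 0 -> (forall a b, P a -> P b -> P (a - b)) -> (forall r a, P a -> P (r * a)) ->
  (forall r j, P r -> P (cp r j)) ->
  Rn N y -> P (y - (1 - x) * s) -> exists k, P (x ^+ k * y).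
Proof.
move=> P0 PB PM Pc Hy Pz.
have PN a : P a -> P (- a) by move=> Ha; rewrite -sub0r; exact: PB.
have PD a b : P a -> P b -> P (a + b).
  by move=> Ha Hb; rewrite -(opprK b); apply: PB => //; exact: PN.
set z := y - (1 - x) * s in Pz.
have Pzk k : P (cp z k) by exact: Pc.
have Ez k : cp z k = (if k == N then y else 0) - cp s k
    + (if (1 <= k)%N then cp s (k - 1) * x else 0).
  rewrite /z comp_sub (comp_hom HR _ Hy) mulrBl mul1r comp_sub mulrC.
  rewrite (comp_mulr HR _ _ Hx); ring.
have S1 : forall k, (k < N)%N -> P (cp s k).
  elim=> [|k IH] kN.
    have -> : cp s 0 = - cp z 0 by rewrite Ez (ltn_eqF kN) /=; ring.
    exact: PN.
  have -> : cp s k.+1 = x * cp s k - cp z k.+1.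
    by rewrite Ez (ltn_eqF kN) /= subSS subn0; ring.
  apply: PB => //; apply: PM; apply: IH; lia.
have S2 : forall d, P (cp s (N + d) - x ^+ d * cp s N).
  elim=> [|d IH]; first by rewrite addn0 expr0 mul1r subrr.
  have -> : cp s (N + d.+1) - x ^+ d.+1 * cp s N
      = x * (cp s (N + d) - x ^+ d * cp s N) - cp z (N + d.+1).
    rewrite Ez.
    have -> : (N + d.+1 == N) = false by apply/negbTE; lia.
    have -> : (1 <= N + d.+1)%N = true by lia.
    have -> : (N + d.+1 - 1 = N + d)%N by lia.
    rewrite exprS; ring.
  by apply: PB => //; apply: PM.
set K := gbnd HR s.
have S3 : P (x ^+ K * cp s N).
  have := S2 K; rewrite comp_bnd ?leq_addl // sub0r => /PN; by rewrite opprK.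
have Pite : P (if (1 <= N)%N then cp s (N - 1) * x else 0).
  case: ifP => HN //; rewrite mulrC; apply: PM; apply: S1; lia.
exists K.
have -> : y = cp z N + cp s N - (if (1 <= N)%N then cp s (N - 1) * x else 0).
  by rewrite Ez eqxx; ring.
rewrite mulrBr mulrDr; apply: PB; [apply: PD => // | exact: PM].
exact: PM.
Qed.

End Tors.

Section Hom.
Variables (S : comPzRingType) (V : lmodType S).
Implicit Types (f : V -> S).

Lemma hom0 f : is_hom f -> f 0 = 0.
Proof.
move=> Hf; have H := Hf 1 0 0; rewrite scaler0 addr0 mul1r in H.
by apply: (addrI (f 0)); rewrite addr0 -H.
Qed.
Lemma homD f u v : is_hom f -> f (u + v) = f u + f v.
Proof. by move=> Hf; rewrite -{1}(scale1r u) Hf mul1r. Qed.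
Lemma homZ f a u : is_hom f -> f (a *: u) = a * f u.
Proof. by move=> Hf; rewrite -(addr0 (a *: u)) Hf (hom0 Hf) addr0. Qed.
Lemma homN f u : is_hom f -> f (- u) = - f u.
Proof. by move=> Hf; rewrite -scaleN1r (homZ _ _ Hf) mulN1r. Qed.
Lemma homB f u v : is_hom f -> f (u - v) = f u - f v.
Proof. by move=> Hf; rewrite (homD _ _ Hf) (homN _ Hf). Qed.
Lemma hom_sum f (I : Type) (s : seq I) (P : pred I) (F : I -> V) : is_hom f ->
  f (\sum_(i <- s | P i) F i) = \sum_(i <- s | P i) f (F i).
Proof.
move=> Hf; apply: (big_ind2 (fun u v => f u = v)); first exact: hom0.
  by move=> x1 x2 y1 y2 <- <-; rewrite (homD _ _ Hf).
by [].
Qed.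

Lemma tr0 : trace_ideal V 0.
Proof.
exists 0%N, (fun _ _ => 0), (fun _ => 0); split; last by rewrite big_ord0.
by move=> i a u v; rewrite mulr0 addr0.
Qed.

Lemma tr_hom f v : is_hom f -> trace_ideal V (f v).
Proof.
by move=> Hf; exists 1%N, (fun _ => f), (fun _ => v); split => //; rewrite big_ord1.
Qed.

Lemma trD a b : trace_ideal V a -> trace_ideal V b -> trace_ideal V (a + b).
Proof.
move=> [n1 [f1 [v1 [H1 ->]]]] [n2 [f2 [v2 [H2 ->]]]].
exists (n1 + n2)%N, (fun i => match split i with inl j => f1 j | inr j => f2 j end),
  (fun i => match split i with inl j => v1 j | inr j => v2 j end); split.
  by move=> i; case: (split i).
rewrite big_split_ord /=; congr (_ + _); apply: eq_bigr => j _.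
  by rewrite -[lshift _ j]/(unsplit (inl j)) unsplitK.
by rewrite -[rshift _ j]/(unsplit (inr j)) unsplitK.
Qed.

Lemma trM r a : trace_ideal V a -> trace_ideal V (r * a).
Proof.
move=> [n [f [v [H ->]]]]; exists n, f, (fun i => r *: v i); split => //.
by rewrite mulr_sumr; apply: eq_bigr => i _; rewrite (homZ _ _ (H i)).
Qed.

Lemma trN a : trace_ideal V a -> trace_ideal V (- a).
Proof. by move=> H; rewrite -mulN1r; apply: trM. Qed.

Lemma trB a b : trace_ideal V a -> trace_ideal V b -> trace_ideal V (a - b).
Proof. by move=> Ha Hb; apply: trD => //; apply: trN. Qed.

Lemma trsum (I : Type) (s : seq I) (P : pred I) (F : I -> S) :
  (forall i, P i -> trace_ideal V (F i)) -> trace_ideal V (\sum_(i <- s | P i) F i).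
Proof. move=> H; apply: big_ind => //; [exact: tr0 | exact: trD]. Qed.

End Hom.

Section Mod.
Variables (R : comPzRingType) (Rn : nat -> R -> Prop).
Hypothesis HR : graded_ring Rn.
Local Notation cp := (gcomp HR).
Local Notation bd := (gbnd HR).

Definition sh (y : R) (e i : nat) := if (e <= i)%N then cp y (i - e) else 0.

Lemma shR y e i : (e <= i)%N -> Rn (i - e) (sh y e i).
Proof. by move=> H; rewrite /sh H; exact: compR. Qed.
Lemma sh_lt y e i : (i < e)%N -> sh y e i = 0.
Proof. by move=> H; rewrite /sh leqNgt H. Qed.
Lemma sh_big y e i : (e + bd y <= i)%N -> sh y e i = 0.
Proof.
move=> H; rewrite /sh; case: ifP => // _; apply: comp_bnd; lia.
Qed.

Lemma sdl y e L : (e + bd y <= L)%N -> y = \sum_(0 <= i < L) sh y e i.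
Proof.
move=> HL; have eL : (e <= L)%N by lia.
rewrite (big_cat_nat (leq0n e) eL) /= big1_seq ?add0r; last first.
  by move=> i /andP[_]; rewrite mem_index_iota => /andP[_ Hi]; rewrite sh_lt.
rewrite -{1}(add0n e) big_addn.
rewrite (eq_bigr (fun i => cp y i)); last by move=> i _; rewrite /sh leq_addl addnK.
by apply: comp_sum_eq; lia.
Qed.

Variables (M : lmodType R) (Mn : int -> M -> Prop).
Hypothesis HM : graded_module Rn Mn.

Lemma Mn0 n : Mn n 0. Proof. by case: HM. Qed.
Lemma MnB n u v : Mn n u -> Mn n v -> Mn n (u - v).
Proof. by case: HM => _ H *; apply: H. Qed.
Lemma MnD n u v : Mn n u -> Mn n v -> Mn n (u + v).
Proof.
move=> Hu Hv; rewrite -(opprK v) -(sub0r v); apply: MnB => //; apply: MnB => //; exact: Mn0.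
Qed.
Lemma MnZ (i : nat) (j : int) a u : Rn i a -> Mn j u -> Mn (i%:Z + j) (a *: u).
Proof. by case: HM => _ _ H *; apply: H. Qed.
Lemma Mnsum n (I : Type) (s : seq I) (P : pred I) (F : I -> M) :
  (forall i, P i -> Mn n (F i)) -> Mn n (\sum_(i <- s | P i) F i).
Proof.
move=> H; elim/big_rec: _ => [|i y Pi Hy]; [exact: Mn0 | exact: MnD (H _ Pi) Hy].
Qed.

Lemma grl (T : finType) (m : T -> M) (d : T -> int) (n : T -> nat) (D : int) (c : T -> R) :
  (forall t, Mn (d t) (m t)) -> (forall t, (n t)%:Z = d t + D) ->
  \sum_t c t *: m t = 0 -> forall i, \sum_t sh (c t) (n t) i *: m t = 0.
Proof.
move=> Hm Hn Hc.
pose w i := \sum_t sh (c t) (n t) i *: m t.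
pose L := (\max_t (n t + bd (c t)))%N.
have HL t : (n t + bd (c t) <= L)%N by apply: (@leq_bigmax _ (fun t => n t + bd (c t))%N).
have Hw i : Mn (i%:Z - D) (w i).
  apply: Mnsum => t _; case: (leqP (n t) i) => H.
    have -> : i%:Z - D = ((i - n t)%N%:Z + d t) by have := Hn t; lia.
    by apply: MnZ; [exact: shR | exact: Hm].
  by rewrite sh_lt // scale0r; exact: Mn0.
have Hsum : \sum_(0 <= i < L) w i = 0.
  rewrite /w exchange_big /=; apply: etrans Hc; apply: eq_bigr => t _.
  by rewrite -scaler_suml -sdl.
case: HM => _ _ _ _ Hd.
pose s := [seq (i%:Z - D) | i <- index_iota 0 L].
pose cM (e : int) := if (0 <= e + D) then w (absz (e + D)) else 0.
have us : uniq s.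
  rewrite map_inj_uniq ?iota_uniq // => i j H; lia.
have HcM e : Mn e (cM e).
  rewrite /cM; case: ifP => H; last exact: Mn0.
  have E : e = ((absz (e + D))%:Z - D) by lia.
  by rewrite {1}E; apply: Hw.
have Hs : \sum_(e <- s) cM e = 0.
  rewrite big_map; apply: etrans Hsum; apply: eq_bigr => i _.
  by rewrite /cM subrK lez_nat absz_nat.
move=> i; case: (ltnP i L) => iL.
  have := Hd s cM us HcM Hs (i%:Z - D).
  rewrite /cM subrK lez_nat absz_nat; apply.
  by apply/mapP; exists i => //; rewrite mem_index_iota.
by apply: big1 => t _; rewrite sh_big ?scale0r //; apply: leq_trans iL.
Qed.

Lemma hgens : fin_gen M -> exists (T : finType) (m : T -> M) (d : T -> int),
  (forall t, Mn (d t) (m t)) /\ forall v, exists c : T -> R, v = \sum_t c t *: m t.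
Proof.
move=> [n [g Hg]].
case: HM => _ _ _ Hdec _.
have Hex i : exists p : seq int * (int -> M),
    (forall e, Mn e (p.2 e)) /\ g i = \sum_(e <- p.1) p.2 e.
  case: (Hdec (g i)) => s [c [_ [Hc E]]]; by exists (s, c).
pose P i := proj1_sig (constructive_indefinite_description _ (Hex i)).
have HP i : (forall e, Mn e ((P i).2 e)) /\ g i = \sum_(e <- (P i).1) (P i).2 e.
  exact: proj2_sig (constructive_indefinite_description _ (Hex i)).
pose L := (\max_i size (P i).1)%N.
have HL i : (size (P i).1 <= L)%N by apply: (@leq_bigmax _ (fun i => size (P i).1)).
exists ('I_n * 'I_L)%type.
exists (fun p : 'I_n * 'I_L => if (p.2 < size (P p.1).1)%N then (P p.1).2 (nth 0 (P p.1).1 p.2) else 0).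
exists (fun p : 'I_n * 'I_L => nth 0 (P p.1).1 p.2); split.
  by move=> [i j] /=; case: ifP => _; [exact: (HP i).1 | exact: Mn0].
move=> v; case: (Hg v) => c ->; exists (fun p : 'I_n * 'I_L => c p.1).
rewrite -(pair_bigA _ (fun (i : 'I_n) (j : 'I_L) => c i *: (if (j < size (P i).1)%N then (P i).2 (nth 0 (P i).1 j) else 0))) /=.
apply: eq_bigr => i _; rewrite -scaler_sumr; congr (_ *: _).
rewrite (HP i).2 (big_nth 0) big_mkord (big_ord_widen L (fun j => (P i).2 (nth 0 (P i).1 j)) (HL i)) big_mkcond /=.
by apply: eq_bigr => j _; case: ifP.
Qed.

Lemma ext_hom (T : finType) (m : T -> M) (g : T -> R) :
  (forall v, exists c : T -> R, v = \sum_t c t *: m t) ->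
  (forall c : T -> R, \sum_t c t *: m t = 0 -> \sum_t c t * g t = 0) ->
  exists phi : M -> R, is_hom phi /\ forall c, phi (\sum_t c t *: m t) = \sum_t c t * g t.
Proof.
move=> Hsp Hrel.
have Hind c c' : \sum_t c t *: m t = \sum_t c' t *: m t -> \sum_t c t * g t = \sum_t c' t * g t.
  move=> E; apply/eqP; rewrite -subr_eq0 -sumrB; apply/eqP.
  rewrite (eq_bigr (fun t => (c t - c' t) * g t)); last by move=> t _; rewrite mulrBl.
  apply: Hrel; rewrite (eq_bigr (fun t => c t *: m t - c' t *: m t)); last by move=> t _; rewrite scalerBl.
  by rewrite sumrB E subrr.
pose C v := proj1_sig (constructive_indefinite_description _ (Hsp v)).
have HC v : v = \sum_t C v t *: m t := proj2_sig (constructive_indefinite_description _ (Hsp v)).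
pose phi v := \sum_t C v t * g t.
have Hphi c : phi (\sum_t c t *: m t) = \sum_t c t * g t.
  by apply: Hind; rewrite -HC.
exists phi; split => //.
move=> a u v; rewrite {1}(HC u) {1}(HC v).
have -> : a *: (\sum_t C u t *: m t) + \sum_t C v t *: m t
    = \sum_t (a * C u t + C v t) *: m t.
  rewrite scaler_sumr -big_split /=; apply: eq_bigr => t _.
  by rewrite scalerA scalerDl.
rewrite Hphi /phi mulr_sumr -big_split /=; apply: eq_bigr => t _.
by rewrite mulrDl mulrA.
Qed.

End Mod.

Section Homog.
Variables (R : comPzRingType) (Rn : nat -> R -> Prop) (M : lmodType R)
    (Mn : int -> M -> Prop).
Hypothesis HR : graded_ring Rn.
Hypothesis HM : graded_module Rn Mn.
Hypothesis Hfg : fin_gen M.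
Local Notation cp := (gcomp HR).
Local Notation bd := (gbnd HR).
Local Notation sh := (sh HR).

Lemma pt c y n i l C : (n <= C)%N -> (C <= i + l)%N ->
  cp (sh c n i * y) (i + l - C) = sh c n i * sh y (C - n) l.
Proof.
move=> nC Cil; case: (leqP n i) => ni; last first.
  by rewrite (sh_lt HR _ ni) !mul0r comp0.
rewrite /sh ni (comp_mull HR _ _ (compR HR c (i - n))).
case: (leqP (C - n) l) => H.
  rewrite ifT; last by lia.
  by have -> : (i + l - C - (i - n) = l - (C - n))%N by lia.
rewrite ifF; first by rewrite mulr0.
by apply/negbTE; rewrite -ltnNge; lia.
Qed.

Lemma pt0 c y n i l C : (n <= C)%N -> (i + l < C)%N ->
  sh c n i * sh y (C - n) l = 0.
Proof.
move=> nC H; case: (leqP n i) => ni; last by rewrite (sh_lt HR _ ni) mul0r.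
by rewrite (sh_lt HR y (_ : l < C - n)%N) ?mulr0 //; lia.
Qed.

Lemma hom_homog (f : M -> R) v j : is_hom f -> trace_ideal M (cp (f v) j).
Proof.
move=> Hf.
case: (hgens HM Hfg) => T [m [d [Hm Hsp]]].
pose Dn := (\max_t absz (d t))%N.
have HD t : (absz (d t) <= Dn)%N by apply: (@leq_bigmax _ (fun t => absz (d t))).
pose n t := absz (d t + Dn%:Z).
have Hn t : (n t)%:Z = d t + Dn%:Z by have := HD t; rewrite /n; lia.
pose C := (\max_t n t)%N.
have HC t : (n t <= C)%N by apply: (@leq_bigmax _ (fun t => n t)).
pose e t := (C - n t)%N.
pose g l t := sh (f (m t)) (e t) l.
have Hrel l c : \sum_t c t *: m t = 0 -> \sum_t c t * g l t = 0.
  move=> Hc.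
  pose L := (\max_t (n t + bd (c t)))%N.
  have HL t : (n t + bd (c t) <= L)%N by apply: (@leq_bigmax _ (fun t => n t + bd (c t))%N).
  have -> : \sum_t c t * g l t = \sum_(0 <= i < L) \sum_t sh (c t) (n t) i * g l t.
    rewrite exchange_big /=; apply: eq_bigr => t _.
    by rewrite -mulr_suml -(sdl (HL t)).
  apply: big1 => i _.
  case: (leqP C (i + l)) => H; last by apply: big1 => t _; apply: pt0.
  have Hw := grl HR HM Hm Hn Hc i.
  transitivity (cp (f (\sum_t sh (c t) (n t) i *: m t)) (i + l - C)); last first.
    by rewrite Hw (hom0 Hf) comp0.
  rewrite (hom_sum _ _ _ Hf) comp_sum; apply: eq_bigr => t _.
  by rewrite (homZ _ _ Hf) pt.
have Hex l : exists phi : M -> R, is_hom phi /\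
    forall c, phi (\sum_t c t *: m t) = \sum_t c t * g l t.
  exact: ext_hom Hsp (Hrel l).
pose F l := proj1_sig (constructive_indefinite_description _ (Hex l)).
have HF l : is_hom (F l) /\ forall c, F l (\sum_t c t *: m t) = \sum_t c t * g l t
  := proj2_sig (constructive_indefinite_description _ (Hex l)).
case: (Hsp v) => c ->.
pose L2 := (\max_t (e t + bd (f (m t))))%N.
have HL2 t : (e t + bd (f (m t)) <= L2)%N
  by apply: (@leq_bigmax _ (fun t => e t + bd (f (m t)))%N).
have -> : f (\sum_t c t *: m t) = \sum_(0 <= l < L2) F l (\sum_t c t *: m t).
  rewrite (hom_sum _ _ _ Hf).
  rewrite (eq_bigr (fun l => \sum_t c t * g l t)); last by move=> l _; rewrite (HF l).2.
  rewrite exchange_big /=; apply: eq_bigr => t _.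
  by rewrite (homZ _ _ Hf) -mulr_sumr -(sdl (HL2 t)).
rewrite comp_sum; apply: trsum => l _.
pose L1 := (\max_t (n t + bd (c t)))%N.
have HL1 t : (n t + bd (c t) <= L1)%N by apply: (@leq_bigmax _ (fun t => n t + bd (c t))%N).
have -> : \sum_t c t *: m t = \sum_(0 <= i < L1) \sum_t sh (c t) (n t) i *: m t.
  rewrite exchange_big /=; apply: eq_bigr => t _.
  by rewrite -scaler_suml -(sdl (HL1 t)).
rewrite (hom_sum _ _ _ (HF l).1) comp_sum; apply: trsum => i _.
have Hh : Rn (i + l - C)%N (F l (\sum_t sh (c t) (n t) i *: m t)).
  rewrite (HF l).2; apply: (Rnsum HR) => t _.
  rewrite /g /e.
  case: (leqP (n t) i) => H1; last by rewrite (sh_lt HR _ H1) mul0r; exact: (Rn0 HR).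
  case: (leqP (C - n t) l) => H2; last by rewrite (sh_lt HR _ H2) mulr0; exact: (Rn0 HR).
  have -> : (i + l - C = (i - n t) + (l - (C - n t)))%N by have := HC t; lia.
  by apply: (RnM HR); apply: shR.
rewrite (comp_hom HR _ Hh); case: eqP => _; last exact: tr0.
by apply: tr_hom; exact: (HF l).1.
Qed.

Lemma tr_homog r j : trace_ideal M r -> trace_ideal M (cp r j).
Proof.
move=> [k [f [v [Hf ->]]]]; rewrite comp_sum; apply: trsum => i _.
exact: hom_homog.
Qed.

End Homog.

Section Part1.
Variables (R : comPzRingType) (Rn : nat -> R -> Prop) (M : lmodType R)
    (Mn : int -> M -> Prop) (x : R)
    (A : comPzRingType) (pi : {rmorphism R -> A})
    (N : lmodType A) (q : M -> N).
Hypothesis Hnoeth : noetherian R.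
Hypothesis HR : graded_ring Rn.
Hypothesis HM : graded_module Rn Mn.
Hypothesis Hfg : fin_gen M.
Hypothesis Hx : Rn 1%N x.
Hypothesis Hpis : forall a : A, exists r, pi r = a.
Hypothesis Hker : forall r, pi r = 0 <-> exists s, r = (1 - x) * s.
Hypothesis HqD : forall u v, q (u + v) = q u + q v.
Hypothesis HqZ : forall (r : R) (u : M), q (r *: u) = pi r *: q u.
Hypothesis Hqs : forall n : N, exists u, q u = n.
Hypothesis Hqk : forall u, q u = 0 <-> exists v, u = (1 - x) *: v.

Local Notation cp := (gcomp HR).
Local Notation bd := (gbnd HR).

Lemma pix : pi x = 1.
Proof.
have : pi (1 - x) = 0 by apply/Hker; exists 1; rewrite mulr1.
by rewrite rmorphB rmorph1 => /eqP; rewrite subr_eq0 => /eqP <-.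
Qed.

Lemma q0 : q 0 = 0.
Proof. by apply: (addrI (q 0)); rewrite -HqD !addr0. Qed.
Lemma qN u : q (- u) = - q u.
Proof. by rewrite -scaleN1r HqZ rmorphN rmorph1 scaleN1r. Qed.
Lemma qB u v : q (u - v) = q u - q v.
Proof. by rewrite HqD qN. Qed.
Lemma q_sum (I : Type) (s : seq I) (P : pred I) (F : I -> M) :
  q (\sum_(i <- s | P i) F i) = \sum_(i <- s | P i) q (F i).
Proof.
apply: (big_ind2 (fun u v => q u = v)); first exact: q0.
  by move=> x1 x2 y1 y2 <- <-; rewrite HqD.
by [].
Qed.

Lemma induced (f : M -> R) : is_hom f ->
  exists g : N -> A, is_hom g /\ forall u, g (q u) = pi (f u).
Proof.
move=> Hf.
have wd u u' : q u = q u' -> pi (f u) = pi (f u').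
  move=> E; have : q (u - u') = 0 by rewrite qB E subrr.
  case/Hqk => w Hw; apply/eqP; rewrite -subr_eq0 -rmorphB -(homB _ _ Hf) Hw.
  rewrite (homZ _ _ Hf); apply/eqP; apply/Hker; by exists (f w).
pose U n := proj1_sig (constructive_indefinite_description _ (Hqs n)).
have HU n : q (U n) = n := proj2_sig (constructive_indefinite_description _ (Hqs n)).
exists (fun n => pi (f (U n))); split; last by move=> u; apply: wd; rewrite HU.
move=> a n1 n2; case: (Hpis a) => r <-.
have -> : pi r *: n1 + n2 = q (r *: U n1 + U n2) by rewrite HqD HqZ !HU.
by rewrite (wd _ (r *: U n1 + U n2)) ?HU // Hf rmorphD rmorphM.
Qed.

Lemma part1a a : ext_ideal pi (trace_ideal M) a -> trace_ideal N a.
Proof.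
move=> [n [b [r [Hr ->]]]]; apply: trsum => i _; apply: trM.
case: (Hr i) => k [f [v [Hf ->]]].
rewrite rmorph_sum; apply: trsum => j _.
case: (induced (Hf j)) => g [Hg Hgq]; rewrite -Hgq; exact: tr_hom.
Qed.

Definition tors (z : R) := exists k, x ^+ k * z = 0.

Lemma tors_unif : exists K, forall z, tors z -> x ^+ K * z = 0.
Proof.
have Hid : is_ideal tors.
  split.
  - by exists 0%N; rewrite mulr0.
  - move=> a b [ka Ha] [kb Hb]; exists (ka + kb)%N.
    have -> : x ^+ (ka + kb) * (a + b) = x ^+ kb * (x ^+ ka * a) + x ^+ ka * (x ^+ kb * b).
      by rewrite exprD; ring.
    by rewrite Ha Hb !mulr0 addr0.
  - by move=> r a [k Ha]; exists k; rewrite mulrCA Ha mulr0.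
case: (Hnoeth Hid) => n [g [Hg Hgen]].
pose k i := proj1_sig (constructive_indefinite_description _ (Hg i)).
have Hk i : x ^+ k i * g i = 0 := proj2_sig (constructive_indefinite_description _ (Hg i)).
exists (\max_i k i)%N => z /Hgen [c ->].
rewrite mulr_sumr big1 // => i _.
have Hle : (k i <= \max_i k i)%N by apply: (@leq_bigmax _ (fun i => k i)).
by rewrite mulrCA -(subnK Hle) exprD -mulrA Hk !mulr0.
Qed.

Lemma pi_lin (T : finType) (m : T -> M) (h : N -> A) (b : T -> R) (c : T -> R) :
  is_hom h -> (forall t, pi (b t) = h (q (m t))) ->
  pi (\sum_t c t * b t) = h (q (\sum_t c t *: m t)).
Proof.
move=> Hh Hb; rewrite rmorph_sum q_sum (hom_sum _ _ _ Hh); apply: eq_bigr => t _.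
by rewrite rmorphM Hb HqZ (homZ _ _ Hh).
Qed.

Lemma lift (h : N -> A) : is_hom h ->
  exists phi : M -> R, is_hom phi /\ forall u, pi (phi u) = h (q u).
Proof.
move=> Hh.
case: (hgens HM Hfg) => T [m [d [Hm Hsp]]].
have Hr t : exists r, pi r = h (q (m t)) by apply: Hpis.
pose r t := proj1_sig (constructive_indefinite_description _ (Hr t)).
have Hrt t : pi (r t) = h (q (m t)) := proj2_sig (constructive_indefinite_description _ (Hr t)).
pose Dn := (\max_t (absz (d t) + bd (r t)))%N.
have HD t : (absz (d t) + bd (r t) <= Dn)%N
  by apply: (@leq_bigmax _ (fun t => absz (d t) + bd (r t))%N).
pose n t := absz (d t + Dn%:Z).
have Hn t : (n t)%:Z = d t + Dn%:Z by have := HD t; rewrite /n; lia.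
have Hnb t : (bd (r t) <= n t)%N by have := HD t; rewrite /n; lia.
pose a t := \sum_(0 <= j < bd (r t)) x ^+ (n t - j) * cp (r t) j.
have Ha t : Rn (n t) (a t) by apply: homog_Rn => //; apply: leq_trans (Hnb t) _.
have Hpa t : pi (a t) = h (q (m t)).
  rewrite -Hrt [in RHS](comp_sum_eq (leqnn (bd (r t)))) /a !rmorph_sum.
  by apply: eq_bigr => j _; rewrite rmorphM rmorphXn pix expr1n mul1r.
case: tors_unif => K HK.
have Hrel c : \sum_t c t *: m t = 0 -> \sum_t c t * (x ^+ K * a t) = 0.
  move=> Hc.
  pose L := (\max_t (n t + bd (c t)))%N.
  have HL t : (n t + bd (c t) <= L)%N by apply: (@leq_bigmax _ (fun t => n t + bd (c t))%N).
  pose Y i := \sum_t sh HR (c t) (n t) i * a t.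
  have E : \sum_t c t * (x ^+ K * a t) = x ^+ K * \sum_(0 <= i < L) Y i.
    rewrite /Y exchange_big /= mulr_sumr; apply: eq_bigr => t _.
    by rewrite -mulr_suml -(sdl (HL t)) mulrCA.
  rewrite E mulr_sumr big1 // => i _; apply: HK.
  have HY : Rn i (Y i).
    apply: (Rnsum HR) => t _; case: (leqP (n t) i) => H.
      by rewrite -{1}(subnK H); apply: (RnM HR); [exact: shR | exact: Ha].
    by rewrite sh_lt // mul0r; exact: (Rn0 HR).
  have : pi (Y i) = 0.
    by rewrite /Y (pi_lin _ Hh Hpa) (grl HR HM Hm Hn Hc) q0 (hom0 Hh).
  case/Hker => s Hs.
  have := @key_tors _ _ HR x Hx (fun z => z = 0) i (Y i) s.
  case => //.
  - by move=> ? ? -> ->; rewrite subrr.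
  - by move=> ? ? ->; rewrite mulr0.
  - by move=> ? ? ->; exact: comp0.
  - by rewrite Hs subrr.
  by move=> k Hk; exists k.
case: (ext_hom Hsp Hrel) => phi [Hphi Hphic].
exists phi; split => // u; case: (Hsp u) => c ->.
rewrite Hphic; apply: pi_lin => // t.
by rewrite rmorphM rmorphXn pix expr1n mul1r.
Qed.

Lemma part1b a : trace_ideal N a -> ext_ideal pi (trace_ideal M) a.
Proof.
move=> [n [h [v [Hh ->]]]].
have Hl i : exists p : (M -> R) * M, is_hom p.1 /\ pi (p.1 p.2) = h i (v i).
  case: (lift (Hh i)) => phi [Hphi Hpq]; case: (Hqs (v i)) => u <-.
  by exists (phi, u); split => //; rewrite Hpq.
pose P i := proj1_sig (constructive_indefinite_description _ (Hl i)).
have HP i : is_hom (P i).1 /\ pi ((P i).1 (P i).2) = h i (v i)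
  := proj2_sig (constructive_indefinite_description _ (Hl i)).
exists n, (fun _ => 1), (fun i => (P i).1 (P i).2); split.
  by move=> i; apply: tr_hom; exact: (HP i).1.
by apply: eq_bigr => i _; rewrite mul1r (HP i).2.
Qed.

End Part1.

Section Part2.
Variables (R : comPzRingType) (Rn : nat -> R -> Prop) (M : lmodType R)
    (Mn : int -> M -> Prop) (x : R)
    (A : comPzRingType) (pi : {rmorphism R -> A})
    (N : lmodType A) (q : M -> N).
Hypothesis Hnoeth : noetherian R.
Hypothesis HR : graded_ring Rn.
Hypothesis HM : graded_module Rn Mn.
Hypothesis Hfg : fin_gen M.
Hypothesis Hx : Rn 1%N x.
Hypothesis Hpis : forall a : A, exists r, pi r = a.
Hypothesis Hker : forall r, pi r = 0 <-> exists s, r = (1 - x) * s.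
Hypothesis HqD : forall u v, q (u + v) = q u + q v.
Hypothesis HqZ : forall (r : R) (u : M), q (r *: u) = pi r *: q u.
Hypothesis Hqs : forall n : N, exists u, q u = n.
Hypothesis Hqk : forall u, q u = 0 <-> exists v, u = (1 - x) *: v.
Hypothesis Hnzd : forall r : R, trace_ideal M (x * r) -> trace_ideal M r.

Local Notation I := (trace_ideal M).
Local Notation J := (trace_ideal N).
Local Notation cp := (gcomp HR).
Local Notation bd := (gbnd HR).

Lemma P1 a : ext_ideal pi I a <-> J a.
Proof.
split; [exact: (part1a Hpis Hker HqD HqZ Hqs Hqk)
       | exact: (part1b Hnoeth HR HM Hfg Hx Hpis Hker HqD HqZ Hqs)].
Qed.

Lemma I0 : I 0. Proof. exact: (@tr0 _ M). Qed.

Lemma IJ r : I r -> J (pi r).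
Proof.
move=> H; apply/P1; exists 1%N, (fun _ => 1), (fun _ => r); split => //.
by rewrite big_ord1 mul1r.
Qed.

Lemma Ihom r j : I r -> I (cp r j). Proof. by move=> H; apply: (tr_homog HR HM Hfg j H). Qed.

Lemma Isum r : (forall j, I (cp r j)) -> I r.
Proof.
move=> H; rewrite (comp_sum_eq (leqnn (bd r))); apply: trsum => j _; exact: H.
Qed.

Lemma Ibad r : ~ I r -> exists j, ~ I (cp r j).
Proof.
move=> H; apply: NNPP => H2; apply: H; apply: Isum => j; apply: NNPP => H3.
by apply: H2; exists j.
Qed.

Lemma Ixk k y : I (x ^+ k * y) -> I y.
Proof.
elim: k => [|k IH]; first by rewrite expr0 mul1r.
by rewrite exprS -mulrA => /Hnzd.
Qed.

Lemma KL n y : Rn n y -> J (pi y) -> I y.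
Proof.
move=> Hy /P1 [k [b [r [Hr E]]]].
have Hb i : exists z, pi z = b i by apply: Hpis.
pose be i := proj1_sig (constructive_indefinite_description _ (Hb i)).
have Hbe i : pi (be i) = b i := proj2_sig (constructive_indefinite_description _ (Hb i)).
pose i0 := \sum_i be i * r i.
have Hi0 : I i0 by apply: trsum => i _; apply: trM.
have : pi (y - i0) = 0.
  rewrite rmorphB rmorph_sum E; apply/eqP; rewrite subr_eq0; apply/eqP.
  by apply: eq_bigr => i _; rewrite rmorphM Hbe.
case/Hker => s Hs.
have Hz : I (y - (1 - x) * s).
  by have -> : y - (1 - x) * s = i0 by rewrite -Hs; ring.
have [kk Hk] := @key_tors _ _ HR x Hx I n y s I0 (@trB _ M) (@trM _ M) Ihom Hy Hz.
exact: Ixk Hk.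
Qed.

Lemma homz r : exists n r', Rn n r' /\ pi r' = pi r.
Proof.
exists (bd r), (\sum_(0 <= j < bd r) x ^+ (bd r - j) * cp r j); split.
  exact: homog_Rn.
rewrite [in RHS](comp_sum_eq (leqnn (bd r))) !rmorph_sum.
by apply: eq_bigr => j _; rewrite rmorphM rmorphXn pix // expr1n mul1r.
Qed.

Lemma liftH a : exists n r', Rn n r' /\ pi r' = a.
Proof. by case: (Hpis a) => r <-; exact: homz. Qed.

Lemma notI1 : ~ J 1 -> ~ I 1.
Proof. by move=> H /IJ; rewrite rmorph1. Qed.
Lemma notJ1 : ~ I 1 -> ~ J 1.
Proof. by move=> H H1; apply: H; apply: (KL (Rn1 HR)); rewrite rmorph1. Qed.

Lemma prime_a : prime_ideal I -> prime_ideal J.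
Proof.
move=> [H1 Hp]; split; first exact: notJ1.
move=> a b Hab; case: (liftH a) => n1 [r1 [H1r E1]]; case: (liftH b) => n2 [r2 [H2r E2]].
have : I (r1 * r2) by apply: (KL (RnM HR H1r H2r)); rewrite rmorphM E1 E2.
by case/Hp => H; [left; rewrite -E1 | right; rewrite -E2]; apply: IJ.
Qed.

Lemma primary_a : primary_ideal I -> primary_ideal J.
Proof.
move=> [H1 Hp]; split; first exact: notJ1.
move=> a b Hab Ha; case: (liftH a) => n1 [r1 [H1r E1]]; case: (liftH b) => n2 [r2 [H2r E2]].
have H12 : I (r1 * r2) by apply: (KL (RnM HR H1r H2r)); rewrite rmorphM E1 E2.
have nI : ~ I r1 by move=> H; apply: Ha; rewrite -E1; apply: IJ.
case: (Hp _ _ H12 nI) => k Hk; exists k; rewrite -E2 -rmorphXn; exact: IJ.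
Qed.

Lemma radical_a : radical_ideal I -> radical_ideal J.
Proof.
move=> Hr a k Hak; case: (liftH a) => n1 [r1 [H1r E1]].
have : I (r1 ^+ k) by apply: (KL (RnX HR k H1r)); rewrite rmorphXn E1.
by move/Hr; rewrite -E1; apply: IJ.
Qed.

Lemma max_ex (P : nat -> Prop) B : (exists j, P j) -> (forall j, P j -> (j < B)%N) ->
  exists p, P p /\ forall j, (p < j)%N -> ~ P j.
Proof.
elim: B => [[j Pj] H|B IH Hex H]; first by have := H j Pj.
case: (classic (P B)) => PB.
  by exists B; split => // j Bj Pj; have := H j Pj; lia.
apply: IH => // j Pj; have := H j Pj; rewrite ltnS leq_eqVlt => /orP [/eqP E|//].
by rewrite E in Pj.
Qed.

Definition trunc r p := \sum_(0 <= i < p.+1) cp r i.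

Lemma cp_trunc r p i : cp (trunc r p) i = if (i <= p)%N then cp r i else 0.
Proof.
rewrite /trunc comp_sum (eq_bigr (fun k => if k == i then cp r i else 0)); last first.
  by move=> k _; rewrite (comp_hom HR i (compR HR r k)) eq_sym; case: eqP => // ->.
case: ifP => H; first by apply: sum_delta.
apply: big1_seq => k /andP[_]; rewrite mem_index_iota => /andP[_ Hk].
by case: eqP => // E; subst k; rewrite ltnS H in Hk.
Qed.

Lemma trunc_diff r p : (forall i, (p < i)%N -> I (cp r i)) -> I (r - trunc r p).
Proof.
move=> H; apply: Isum => i; rewrite comp_sub cp_trunc; case: ifP => Hi.
  by rewrite subrr; exact: I0.
by rewrite subr0; apply: H; rewrite ltnNge Hi.
Qed.

Lemma mccoy n : forall S r s, (size S <= n)%N -> (forall i, i \notin S -> I (cp r i)) ->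
  I (r * s) -> ~ I r -> exists c m, Rn m c /\ ~ I c /\ I (c * s).
Proof.
elim: n => [|n IH] S r s HS Hsupp Hrs Hr.
  have [j Hj] := Ibad Hr; exfalso; apply: Hj; apply: Hsupp.
  by move: HS; rewrite leqn0 => /nilP ->.
case: (classic (forall j, I (r * cp s j))) => [Hall|Hnot].
  case: (Ibad Hr) => i0 Hi0; exists (cp r i0), i0; split; first exact: compR.
  split => //.
  rewrite (comp_sum_eq (leqnn (bd s))) mulr_sumr; apply: trsum => j _.
  by have := Ihom (i0 + j) (Hall j); rewrite (comp_mulr HR _ _ (compR HR s j)) leq_addl addnK.
have Hex : exists j, ~ I (r * cp s j).
  apply: NNPP => H; apply: Hnot => j; apply: NNPP => H2; apply: H; by exists j.
have [q0 [Hq Hqmax]] : exists q0, ~ I (r * cp s q0) /\ forall j, (q0 < j)%N -> ~ ~ I (r * cp s j).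
  apply: (max_ex (B := bd s) Hex) => j Hj; rewrite ltnNge; apply/negP => H; apply: Hj.
  rewrite comp_bnd // mulr0; exact: I0.
have Bd : forall j, ~ I (cp r j) -> (j < bd r)%N.
  move=> j Hj; rewrite ltnNge; apply/negP => H; apply: Hj; rewrite comp_bnd //; exact: I0.
have [p [Hp Hpmax]] := max_ex (Ibad Hr) Bd.
have pS : p \in S by apply: NNPP => H; apply: Hp; apply: Hsupp; apply/negP.
pose r' := trunc r p; pose s' := trunc s q0.
have Hrr : I (r - r') by apply: trunc_diff => i Hi; apply: NNPP; exact: Hpmax.
have Hrj j : (q0 < j)%N -> I (r' * cp s j).
  move=> Hj; have H1 : I (r * cp s j) by apply: NNPP; exact: Hqmax.
  have -> : r' * cp s j = r * cp s j - cp s j * (r - r') by ring.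
  by apply: trB => //; apply: trM.
have Hss : s - s' = \sum_(q0.+1 <= j < maxn (bd s) q0.+1) cp s j.
  rewrite {1}(comp_sum_eq (leq_maxl (bd s) q0.+1)) /s' /trunc.
  by rewrite (big_cat_nat (leq0n q0.+1) (leq_maxr _ _)) /= addrAC subrr add0r.
have Hr's' : I (r' * s').
  have -> : r' * s' = r * s - s * (r - r') - r' * (s - s') by ring.
  apply: trB; first by apply: trB => //; apply: trM.
  rewrite Hss mulr_sumr big_seq; apply: trsum => j; rewrite mem_index_iota => /andP [Hj _].
  exact: Hrj.
have Htop : I (cp r p * cp s q0).
  have T1 : forall i, (p < i)%N -> cp r' i = 0 by move=> i H; rewrite cp_trunc leqNgt H.
  have T2 : forall i, (q0 < i)%N -> cp s' i = 0 by move=> i H; rewrite cp_trunc leqNgt H.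
  have [E _] := comp_mul_top T1 T2.
  by have := Ihom (p + q0) Hr's'; rewrite E !cp_trunc !leqnn.
pose S2 := [seq i + q0 | i <- [seq i <- S | i != p]]%N.
have HS2 : (size S2 <= n)%N.
  rewrite size_map size_filter.
  have E2 : count (fun i => i != p) S = count (predC (pred1 p)) S by apply: eq_count.
  have := count_predC (pred1 p) S.
  have : (0 < count (pred1 p) S)%N by rewrite -has_count has_pred1.
  move: HS; rewrite E2; lia.
apply: (IH S2 (r * cp s q0) s HS2) => //.
- move=> k Hk; rewrite (comp_mulr HR _ _ (compR HR s q0)); case: ifP => qk; last exact: I0.
  case: (eqVneq (k - q0)%N p) => E; first by rewrite E.
  rewrite mulrC; apply: trM; apply: Hsupp; apply/negP => HkS; move/negP: Hk; apply.
  apply/mapP; exists (k - q0)%N; first by rewrite mem_filter E HkS.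
  by rewrite subnK.
- have -> : r * cp s q0 * s = cp s q0 * (r * s) by ring.
  exact: trM.
Qed.

Lemma Isupp r : forall i, i \notin iota 0 (bd r) -> I (cp r i).
Proof.
move=> i Hi; rewrite comp_bnd; first exact: I0.
by move: Hi; rewrite mem_iota /= add0n; lia.
Qed.

Lemma prime_b : prime_ideal J -> prime_ideal I.
Proof.
move=> [HJ1 HJp]; split; first exact: notI1.
move=> r s Hrs; case: (classic (I r)) => Hr; [by left | right].
have [c [Nc [Hc [nIc Hcs]]]] := mccoy (leqnn _) (@Isupp r) Hrs Hr.
apply: Isum => j; apply: (KL (compR HR s j)).
have Hcj : I (c * cp s j).
  by have := Ihom (Nc + j) Hcs; rewrite (comp_mull HR _ _ Hc) leq_addr addKn.
have := IJ Hcj; rewrite rmorphM => /HJp [H|//].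
by exfalso; apply: nIc; exact: KL Hc H.
Qed.

Lemma nil_add a b n m : I (a ^+ n) -> I (b ^+ m) -> I ((a + b) ^+ (n + m)).
Proof.
move=> Ha Hb; rewrite exprDn; apply: trsum => i _; rewrite -mulr_natl; apply: trM.
case: (leqP m i) => H.
  have -> : a ^+ (n + m - i) * b ^+ i = (a ^+ (n + m - i) * b ^+ (i - m)) * b ^+ m.
    by rewrite -mulrA -exprD subnK.
  by apply: trM.
have -> : a ^+ (n + m - i) * b ^+ i = (a ^+ (n + m - i - n) * b ^+ i) * a ^+ n.
  have {1}-> : (n + m - i = (n + m - i - n) + n)%N by lia.
  by rewrite exprD; ring.
by apply: trM.
Qed.

Lemma nil_sum (s : seq nat) (F : nat -> R) :
  (forall j, j \in s -> exists n, I (F j ^+ n)) -> exists n, I ((\sum_(j <- s) F j) ^+ n).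
Proof.
elim: s => [|j s IH] H.
  by exists 1%N; rewrite big_nil expr1; exact: I0.
have [n1 H1] := H j (mem_head _ _).
have H' : forall j', j' \in s -> exists n, I (F j' ^+ n).
  by move=> j' Hj'; apply: H; rewrite inE Hj' orbT.
have [n2 H2] := IH H'.
by exists (n1 + n2)%N; rewrite big_cons; apply: nil_add.
Qed.

Lemma primary_b : primary_ideal J -> primary_ideal I.
Proof.
move=> [HJ1 HJp]; split; first exact: notI1.
move=> r s Hrs Hr.
have [c [Nc [Hc [nIc Hcs]]]] := mccoy (leqnn _) (@Isupp r) Hrs Hr.
suff [n Hn] : exists n, I ((\sum_(j <- index_iota 0 (bd s)) cp s j) ^+ n).
  by exists n; rewrite (comp_sum_eq (leqnn (bd s))).
apply: nil_sum => j _.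
have Hcj : I (c * cp s j).
  by have := Ihom (Nc + j) Hcs; rewrite (comp_mull HR _ _ Hc) leq_addr addKn.
have nJc : ~ J (pi c) by move=> H; apply: nIc; exact: KL Hc H.
have := IJ Hcj; rewrite rmorphM => /HJp /(_ nJc) [k Hk].
exists k; apply: (KL (RnX HR k (compR HR s j))); by rewrite rmorphXn.
Qed.

Lemma Ipow a b n : I (a - b) -> I (a ^+ n - b ^+ n).
Proof.
move=> H; elim: n => [|n IH]; first by rewrite !expr0 subrr; exact: I0.
have -> : a ^+ n.+1 - b ^+ n.+1 = a * (a ^+ n - b ^+ n) + b ^+ n * (a - b)
  by rewrite !exprS; ring.
by apply: trD; apply: trM.
Qed.

Lemma radical_b : radical_ideal J -> radical_ideal I.
Proof.
move=> HJr r n Hrn; apply: NNPP => Hr.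
have Bd : forall j, ~ I (cp r j) -> (j < bd r)%N.
  move=> j Hj; rewrite ltnNge; apply/negP => H; apply: Hj; rewrite comp_bnd //; exact: I0.
have [p [Hp Hpmax]] := max_ex (Ibad Hr) Bd.
pose r' := trunc r p.
have Hrr : I (r - r') by apply: trunc_diff => i Hi; apply: NNPP; exact: Hpmax.
have Hr'n : I (r' ^+ n).
  have -> : r' ^+ n = r ^+ n - (r ^+ n - r' ^+ n) by ring.
  by apply: trB => //; apply: Ipow.
have T1 : forall i, (p < i)%N -> cp r' i = 0 by move=> i H; rewrite cp_trunc leqNgt H.
have [E _] := comp_pow_top T1 n.
have := Ihom (n * p) Hr'n; rewrite E cp_trunc leqnn => Hpn.
have := IJ Hpn; rewrite rmorphXn => /HJr H.
by apply: Hp; exact: KL (compR HR r p) H.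
Qed.

End Part2.

Unset Implicit Arguments. Set Strict Implicit. Set Printing Implicit Defensive.

Theorem proposition2p4
    (R : comPzRingType) (Rn : nat -> R -> Prop) (M : lmodType R)
    (Mn : int -> M -> Prop) (x : R)
    (A : comPzRingType) (pi : {rmorphism R -> A})
    (N : lmodType A) (q : M -> N) :
  noetherian R -> graded_ring Rn -> graded_module Rn Mn -> fin_gen M ->
  Rn 1%N x -> (forall n : nat, x ^+ n != 0) ->
  (forall a : A, exists r, pi r = a) ->
  (forall r, pi r = 0 <-> exists s, r = (1 - x) * s) ->
  (forall u v, q (u + v) = q u + q v) ->
  (forall (r : R) (u : M), q (r *: u) = pi r *: q u) ->
  (forall n : N, exists u, q u = n) ->
  (forall u, q u = 0 <-> exists v, u = (1 - x) *: v) ->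
  (forall a : A, ext_ideal pi (@trace_ideal R M) a <-> @trace_ideal A N a) /\
  ((forall r : R, @trace_ideal R M (x * r) -> @trace_ideal R M r) ->
   [/\ prime_ideal (@trace_ideal R M) <-> prime_ideal (@trace_ideal A N),
        primary_ideal (@trace_ideal R M) <-> primary_ideal (@trace_ideal A N) &
        radical_ideal (@trace_ideal R M) <-> radical_ideal (@trace_ideal A N)]).
Proof.
move=> Hnoeth HR HM Hfg Hx _ Hpis Hker HqD HqZ Hqs Hqk; split.
  move=> a; split.
    exact: (part1a Hpis Hker HqD HqZ Hqs Hqk).
  exact: (part1b Hnoeth HR HM Hfg Hx Hpis Hker HqD HqZ Hqs).
move=> Hnzd; split; split.
- exact: (prime_a Hnoeth HR HM Hfg Hx Hpis Hker HqD HqZ Hqs Hqk Hnzd).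
- exact: (prime_b Hnoeth HR HM Hfg Hx Hpis Hker HqD HqZ Hqs Hqk Hnzd).
- exact: (primary_a Hnoeth HR HM Hfg Hx Hpis Hker HqD HqZ Hqs Hqk Hnzd).
- exact: (primary_b Hnoeth HR HM Hfg Hx Hpis Hker HqD HqZ Hqs Hqk Hnzd).
- exact: (radical_a Hnoeth HR HM Hfg Hx Hpis Hker HqD HqZ Hqs Hqk Hnzd).
- exact: (radical_b Hnoeth HR HM Hfg Hx Hpis Hker HqD HqZ Hqs Hqk Hnzd).
Qed.
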